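(* Let $k$ be an algebraically closed field and $\ell\neq\mathrm{char}(k)$ a prime. Then: (a) An element of $\mathrm{Aut}(\mathbb P^1_k)$ is parabolic if and only if it is uniquely $\ell$-divisible. (b) A subgroup of $\mathrm{Aut}(\mathbb P^1_k)$ is the stabiliser of some point $P\in\mathbb P^1(k)$ if and only if it is the normaliser of the centraliser of some parabolic element.
   Context: An automorphism of $\mathbb P^1_k$ is parabolic if it has exactly one fixed point in $\mathbb P^1(k)$. An element $x$ of a group $G$ is uniquely $\ell$-divisible if there is exactly one $y\in G$ with $y^\ell=x$. *)

(* Defs.v *)
(* Aut(P^1_k) = PGL_2(k), represented by invertible 2x2
   matrices modulo nonzero scalars; P^1(k) = nonzero column vectors modulo
   nonzero scalars. *)
From HB Require Import structures.
From mathcomp Require Import all_boot all_order all_algebra all_field.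
Set Implicit Arguments. Unset Strict Implicit. Unset Printing Implicit Defensive.
Import GRing.Theory.
Local Open Scope ring_scope.

Section PGL2.
Variable k : fieldType.

Definition projeq m n (A B : 'M[k]_(m, n)) : Prop :=
  exists c : k, c != 0 /\ A = c *: B.

Definition fixes_pt (A : 'M[k]_2) (v : 'cV[k]_2) : Prop :=
  v != 0 /\ exists c : k, A *m v = c *: v.

Definition parabolic (A : 'M[k]_2) : Prop :=
  exists v, fixes_pt A v /\ forall w, fixes_pt A w -> projeq w v.

Definition uniq_divisible (l : nat) (A : 'M[k]_2) : Prop :=
  (exists y : 'M[k]_2, y \in unitmx /\ projeq (y ^+ l) A) /\
  (forall y y' : 'M[k]_2, y \in unitmx -> y' \in unitmx ->
     projeq (y ^+ l) A -> projeq (y' ^+ l) A -> projeq y y').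

(* subgroups of PGL_2(k): scalar-saturated subgroups of GL_2(k) containing
   the scalars *)
Definition pgl_subgroup (H : 'M[k]_2 -> Prop) : Prop :=
  [/\ forall A, H A -> A \in unitmx,
      forall A B, projeq A B -> H B -> H A,
      H 1,
      forall A B, H A -> H B -> H (A *m B)
    & forall A, H A -> H (invmx A)].

Definition same_subgroup (H K : 'M[k]_2 -> Prop) : Prop :=
  forall A, A \in unitmx -> (H A <-> K A).

Definition stabiliser (v : 'cV[k]_2) : 'M[k]_2 -> Prop :=
  fun A => A \in unitmx /\ exists c : k, A *m v = c *: v.

Definition centraliser (x : 'M[k]_2) : 'M[k]_2 -> Prop :=
  fun A => A \in unitmx /\ projeq (A *m x) (x *m A).

Definition normaliser (C : 'M[k]_2 -> Prop) : 'M[k]_2 -> Prop :=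
  fun A => A \in unitmx /\
    forall B, B \in unitmx -> (C B <-> C (A *m B *m invmx A)).

End PGL2.

(* Main.v *)
From HB Require Import structures.
From mathcomp Require Import all_boot all_order all_algebra all_field.
From mathcomp Require Import ring.
Require Import Defs.
From Stdlib Require Import Classical.
Import GRing.Theory.
Local Open Scope ring_scope.

Set Implicit Arguments.
Unset Strict Implicit.
Notation i0 := (@Ordinal 2 0 isT).
Notation i1 := (@Ordinal 2 1 isT).

Section Mk.
Variable k : fieldType.

Lemma ord2 (i : 'I_2) : i = i0 \/ i = i1.
Proof. case: i => [[|[|//]]] H; [left|right]; exact: val_inj. Qed.
Lemma ord1 (i : 'I_1) : i = ord0.
Proof. case: i => [[|//]] H; exact: val_inj. Qed.

Lemma mul2E m (A : 'M[k]_(m,2)) n (B : 'M[k]_(2,n)) i j :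
  (A *m B) i j = A i i0 * B i0 j + A i i1 * B i1 j.
Proof.
rewrite mxE !big_ord_recl big_ord0 addr0; congr (_ * _ + _ * _);
  congr (_ _ _); exact: val_inj.
Qed.

Lemma det2 (A : 'M[k]_2) : \det A = A i0 i0 * A i1 i1 - A i0 i1 * A i1 i0.
Proof.
rewrite (expand_det_row _ i0) !big_ord_recl big_ord0 addr0 /cofactor !det_mx11 !mxE /=.
have E1 : (lift i0 0 : 'I_2) = i1 by exact: val_inj.
have E2 : (lift i0 ord0 : 'I_2) = i1 by exact: val_inj.
have E3 : (lift i1 0 : 'I_2) = i0 by exact: val_inj.
have E0 : (ord0 : 'I_2) = i0 by exact: val_inj.
rewrite ?E0 ?E1 ?E2 ?E3 /= ?expr0 ?expr1; ring.
Qed.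

Definition mk (a b c d : k) : 'M[k]_2 :=
  \matrix_(i, j) (if (i : nat) == 0%N then (if (j : nat) == 0%N then a else b)
                  else (if (j : nat) == 0%N then c else d)).
Definition mkv (a b : k) : 'cV[k]_2 :=
  \col_i (if (i : nat) == 0%N then a else b).

Lemma mkP (A : 'M[k]_2) : exists a b c d, A = mk a b c d.
Proof.
exists (A i0 i0), (A i0 i1), (A i1 i0), (A i1 i1).
apply/matrixP => i j; rewrite mxE.
by case: (ord2 i) => ->; case: (ord2 j) => ->.
Qed.

Lemma mkvP (v : 'cV[k]_2) : exists a b, v = mkv a b.
Proof.
exists (v i0 ord0), (v i1 ord0).
apply/matrixP => i j; rewrite mxE (ord1 j).
by case: (ord2 i) => ->.
Qed.

Lemma mk_inj a b c d a' b' c' d' : mk a b c d = mk a' b' c' d' ->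
  [/\ a = a', b = b', c = c' & d = d'].
Proof.
move=> E; have F i j := congr1 (fun M : 'M_2 => M i j) E.
move: (F i0 i0) (F i0 i1) (F i1 i0) (F i1 i1); rewrite !mxE /=; by [].
Qed.

Lemma mkv_inj a b a' b' : mkv a b = mkv a' b' -> a = a' /\ b = b'.
Proof.
move=> E; have F i := congr1 (fun M : 'cV_2 => M i ord0) E.
move: (F i0) (F i1); rewrite !mxE /=; by [].
Qed.

Lemma mkM a b c d a' b' c' d' : mk a b c d *m mk a' b' c' d' =
  mk (a * a' + b * c') (a * b' + b * d') (c * a' + d * c') (c * b' + d * d').
Proof.
apply/matrixP => i j; rewrite mul2E !mxE.
by case: (ord2 i) => ->; case: (ord2 j) => ->.
Qed.

Lemma mkMv a b c d x y : mk a b c d *m mkv x y = mkv (a * x + b * y) (c * x + d * y).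
Proof.
apply/matrixP => i j; rewrite mul2E !mxE.
by case: (ord2 i) => ->.
Qed.

Lemma mkZ e a b c d : e *: mk a b c d = mk (e * a) (e * b) (e * c) (e * d).
Proof.
apply/matrixP => i j; rewrite !mxE.
by case: (ord2 i) => ->; case: (ord2 j) => ->.
Qed.

Lemma mkvZ e a b : e *: mkv a b = mkv (e * a) (e * b).
Proof. apply/matrixP => i j; rewrite !mxE. by case: (ord2 i) => ->. Qed.

Lemma mk1 : (1%:M : 'M[k]_2) = mk 1 0 0 1.
Proof.
apply/matrixP => i j; rewrite !mxE.
by case: (ord2 i) => ->; case: (ord2 j) => ->.
Qed.

Lemma mk_unit a b c d : (mk a b c d \in unitmx) = (a * d - b * c != 0).
Proof. by rewrite unitmxE unitfE det2 !mxE. Qed.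

Lemma mkv_eq0 a b : (mkv a b == 0) = (a == 0) && (b == 0).
Proof.
apply/eqP/andP => [E|[/eqP-> /eqP->]].
  have F i := congr1 (fun M : 'cV_2 => M i ord0) E.
  by move: (F i0) (F i1); rewrite !mxE /= => -> ->.
by apply/matrixP => i j; rewrite !mxE; case: (ord2 i) => ->.
Qed.

End Mk.
Section Conj.
Variable k : fieldType.
Definition conj (Q A : 'M[k]_2) := Q *m A *m invmx Q.
Variable Q : 'M[k]_2.
Hypothesis hQ : Q \in unitmx.

Lemma conjM A B : conj Q (A *m B) = conj Q A *m conj Q B.
Proof. by rewrite /conj !mulmxA mulmxKV. Qed.
Lemma conj1 : conj Q 1%:M = 1%:M.
Proof. by rewrite /conj mulmx1 mulmxV. Qed.
Lemma conjZ c A : conj Q (c *: A) = c *: conj Q A.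
Proof. by rewrite /conj -scalemxAr -scalemxAl. Qed.
Lemma conj_unit A : (conj Q A \in unitmx) = (A \in unitmx).
Proof. by rewrite /conj !unitmx_mul unitmx_inv hQ andbT. Qed.
Lemma conjV_unit A : (conj (invmx Q) A \in unitmx) = (A \in unitmx).
Proof. by rewrite /conj !unitmx_mul !unitmx_inv hQ andbT. Qed.
Lemma conjK A : conj (invmx Q) (conj Q A) = A.
Proof. by rewrite /conj invmxK !mulmxA mulVmx // mul1mx mulmxKV. Qed.
Lemma conjVK A : conj Q (conj (invmx Q) A) = A.
Proof. by rewrite /conj invmxK !mulmxA mulmxV // mul1mx mulmxK. Qed.
Lemma conj_inj : injective (conj Q).
Proof. by move=> A B E; rewrite -(conjK A) E conjK. Qed.
Lemma conjX A n : conj Q (A ^+ n) = (conj Q A) ^+ n.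
Proof.
elim: n => [|n IH]; first by rewrite !expr0 conj1.
by rewrite !exprS -!mulmxE conjM IH.
Qed.
Lemma conj_inv A : A \in unitmx -> conj Q (invmx A) = invmx (conj Q A).
Proof.
move=> hA.
have E : conj Q A *m conj Q (invmx A) = 1%:M by rewrite -conjM mulmxV // conj1.
have hA' : conj Q A \in unitmx by rewrite conj_unit.
have := mulKmx hA' (conj Q (invmx A)); by rewrite E mulmx1.
Qed.
Lemma conj_vec A (w : 'cV[k]_2) : conj Q A *m (Q *m w) = Q *m (A *m w).
Proof. by rewrite /conj !mulmxA mulmxKV. Qed.
Lemma Qvec_inj (w w' : 'cV[k]_2) : Q *m w = Q *m w' -> w = w'.
Proof. by move=> E; rewrite -(mulKmx hQ w) E mulKmx. Qed.
Lemma Qvec_eq0 (w : 'cV[k]_2) : (Q *m w == 0) = (w == 0).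
Proof.
apply/eqP/eqP => [E|->]; last by rewrite mulmx0.
by apply: Qvec_inj; rewrite E mulmx0.
Qed.

Lemma projeq_conj A B : projeq (conj Q A) (conj Q B) <-> projeq A B.
Proof.
split=> [[c [c0 E]]|[c [c0 E]]]; exists c; split => //.
  by apply: conj_inj; rewrite E conjZ.
by rewrite E conjZ.
Qed.

Lemma fixes_conj A w : fixes_pt (conj Q A) (Q *m w) <-> fixes_pt A w.
Proof.
rewrite /fixes_pt Qvec_eq0 conj_vec.
split=> -[w0 [c E]]; split=> //; exists c.
  by apply: Qvec_inj; rewrite E scalemxAr.
by rewrite E scalemxAr.
Qed.

Lemma parabolic_conj A : parabolic A -> parabolic (conj Q A).
Proof.
move=> [v [fv uv]]; exists (Q *m v); split; first by rewrite fixes_conj.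
move=> w fw.
have ew : w = Q *m (invmx Q *m w) by rewrite mulKVmx.
rewrite ew fixes_conj in fw.
have [c [c0 E]] := uv _ fw.
exists c; split => //; by rewrite ew E scalemxAr.
Qed.

Lemma uniqdiv_conj l A : uniq_divisible l A -> uniq_divisible l (conj Q A).
Proof.
move=> [[y [yu [c [c0 E]]]] U]; split.
  exists (conj Q y); split; first by rewrite conj_unit.
  by exists c; split => //; rewrite -conjX E conjZ.
move=> y1 y2 u1 u2 h1 h2.
rewrite -(conjVK y1) -(conjVK y2); apply/projeq_conj.
have hQ' : invmx Q \in unitmx by rewrite unitmx_inv.
apply: U.
- by rewrite conjV_unit.
- by rewrite conjV_unit.
- by apply/projeq_conj; rewrite conjX conjVK.
- by apply/projeq_conj; rewrite conjX conjVK.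
Qed.

Lemma centraliser_conj x B :
  centraliser (conj Q x) (conj Q B) <-> centraliser x B.
Proof.
rewrite /centraliser conj_unit -!conjM.
split=> -[h1 h2]; split=> //; by apply/projeq_conj.
Qed.

Lemma normaliser_conj x A :
  normaliser (centraliser (conj Q x)) (conj Q A) <->
  normaliser (centraliser x) A.
Proof.
rewrite /normaliser conj_unit.
have hQ' : invmx Q \in unitmx by rewrite unitmx_inv.
split=> -[hA H]; split=> // B hB.
  rewrite -(centraliser_conj x B) -(centraliser_conj x (A *m B *m invmx A)).
  by rewrite !conjM conj_inv // H // conj_unit.
rewrite -(conjVK B) centraliser_conj -(@conj_inv A hA) -!conjM centraliser_conj.
by apply: H; rewrite conjV_unit.
Qed.

Lemma stabiliser_conj w A :
  stabiliser (Q *m w) (conj Q A) <-> stabiliser w A.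
Proof.
rewrite /stabiliser conj_unit conj_vec.
split=> -[h [c E]]; split=> //; exists c.
  by apply: Qvec_inj; rewrite E scalemxAr.
by rewrite E scalemxAr.
Qed.
End Conj.
Section Coord.
Variable k : fieldType.
Implicit Types (p q a b c d : k).

Lemma parabolic_u p q : q != 0 -> parabolic (mk p q 0 p).
Proof.
move=> q0; exists (mkv 1 0); split.
  split; first by rewrite mkv_eq0 oner_eq0.
  by exists p; rewrite mkMv mkvZ; congr mkv; ring.
move=> w [w0 [c E]]; have [a [b ew]] := mkvP w; subst w.
rewrite mkMv mkvZ in E; case: (mkv_inj E) => E1 E2.
have b0 : b = 0.
  apply/eqP/negPn/negP => bn0.
  have pc : p = c by apply: (mulIf bn0); rewrite -E2; ring.
  have : q * b = 0.
    have -> : q * b = (p * a + q * b) - c * a by rewrite pc; ring.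
    by rewrite E1 subrr.
  by move/eqP; rewrite mulf_eq0 (negbTE q0) (negbTE bn0).
subst b; have a0 : a != 0 by move: w0; rewrite mkv_eq0 eqxx andbT.
by exists a; split => //; rewrite mkvZ; congr mkv; ring.
Qed.

Lemma powu b n : (mk 1 b 0 1) ^+ n = mk 1 (n%:R * b) 0 1.
Proof.
elim: n => [|n IH]; first by rewrite expr0 mul0r -mk1.
rewrite exprS IH -mulmxE mkM; congr mk; rewrite ?mulrS; ring.
Qed.

Lemma powd a d n : (mk a 0 0 d) ^+ n = mk (a ^+ n) 0 0 (d ^+ n).
Proof.
elim: n => [|n IH]; first by rewrite !expr0 -mk1.
rewrite exprS IH -mulmxE mkM !exprS; congr mk; ring.
Qed.

Lemma stab_e1 a b c d :
  stabiliser (mkv 1 0) (mk a b c d) <-> mk a b c d \in unitmx /\ c = 0.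
Proof.
rewrite /stabiliser mkMv; split=> -[u H]; split => //.
  by case: H => e; rewrite mkvZ => /mkv_inj [_]; rewrite !mulr1 !mulr0 addr0.
by exists a; rewrite mkvZ H; congr mkv; ring.
Qed.

Lemma centr_u p q a b c d : p != 0 -> q != 0 ->
  centraliser (mk p q 0 p) (mk a b c d) <->
  [/\ mk a b c d \in unitmx, c = 0 & a = d].
Proof.
move=> p0 q0; rewrite /centraliser; split.
  move=> [u [g [g0 E]]].
  rewrite !mkM mkZ in E; case: (mk_inj E) => E1 E2 E3 E4.
  rewrite ?(mulr0, mul0r, addr0, add0r) in E1 E2 E3 E4.
  have c0 : c = 0.
    apply/eqP/negPn/negP => cn0.
    have g1 : g = 1.
      apply: (mulIf (mulf_neq0 cn0 p0)); rewrite mul1r [RHS]E3; ring.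
    have : q * c = 0.
      have -> : q * c = g * (p * a + q * c) - a * p by rewrite g1; ring.
      rewrite -E1; ring.
    by move/eqP; rewrite mulf_eq0 (negbTE q0) (negbTE cn0).
  subst c; split => //.
  rewrite ?(mulr0, mul0r, addr0, add0r) in E1 E2 E3 E4.
  have a0 : a != 0.
    by apply/negP => /eqP a0; move: u; rewrite mk_unit a0; rewrite !(mul0r, mulr0, subrr) eqxx.
  have g1 : g = 1.
    apply: (mulIf (mulf_neq0 a0 p0)); rewrite mul1r [RHS]E1; ring.
  subst g; apply: (mulIf q0); move: E2; rewrite !mul1r => E2.
  apply/eqP; rewrite -(subr_eq0) ; apply/eqP.
  have -> : a * q - d * q = (a * q + b * p) - (p * b + q * d) by ring.
  by rewrite E2 subrr.
move=> [u c0 ad]; split => //; exists 1; split; first exact: oner_neq0.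
by rewrite scale1r !mkM c0 ad; congr mk; ring.
Qed.
End Coord.
Section Norm.
Variable k : fieldType.
Implicit Types (p q a b c d : k).

Lemma unit_nz a b d : mk a b 0 d \in unitmx -> a != 0 /\ d != 0.
Proof.
by rewrite mk_unit mulr0 subr0 mulf_eq0 negb_or => /andP.
Qed.

Lemma centr_upper p q a1 a2 a3 (B M : 'M[k]_2) : p != 0 -> q != 0 ->
  mk a1 a2 0 a3 \in unitmx -> B \in unitmx -> M \in unitmx ->
  M *m mk a1 a2 0 a3 = mk a1 a2 0 a3 *m B ->
  (centraliser (mk p q 0 p) B <-> centraliser (mk p q 0 p) M).
Proof.
move=> p0 q0 uA uB uM.
have [a10 a30] := unit_nz uA.
have [b1 [b2 [b3 [b4 eB]]]] := mkP B; subst B.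
have [m1 [m2 [m3 [m4 eM]]]] := mkP M; subst M.
rewrite !centr_u // !mkM => /mk_inj [F1 F2 F3 F4].
rewrite ?(mulr0, mul0r, addr0, add0r) in F1 F2 F3 F4.
split=> -[_ e3 e14]; split => //.
- subst b3; rewrite mulr0 in F3.
  by move/eqP: F3; rewrite mulf_eq0 (negbTE a10) orbF => /eqP.
- subst b3 b4; rewrite ?(mulr0, mul0r, addr0, add0r) in F1 F2 F3 F4.
  have m30 : m3 = 0 by move/eqP: F3; rewrite mulf_eq0 (negbTE a10) orbF => /eqP.
  subst m3; rewrite mul0r add0r in F4.
  have : m1 * a1 = b1 * a1 by rewrite F1 mulrC.
  move/(mulIf a10) => ->.
  by apply: (mulIf a30); rewrite F4 mulrC.
- subst m3.
  by move/eqP: F3; rewrite mul0r eq_sym mulf_eq0 (negbTE a30) => /eqP.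
- subst m3 m4.
  have b30 : b3 = 0 by move/eqP: F3; rewrite mul0r eq_sym mulf_eq0 (negbTE a30) => /eqP.
  subst b3; rewrite mulr0 addr0 in F1; rewrite mul0r add0r in F4.
  have E1 : b1 = m1 by apply: (mulIf a10); rewrite F1 mulrC.
  have E4 : b4 = m1 by apply: (mulIf a30); rewrite F4 mulrC.
  by rewrite E1 E4.
Qed.
End Norm.
Section Norm2.
Variable k : fieldType.
Implicit Types (p q a b c d : k).

Lemma norm_u p q (A : 'M[k]_2) : p != 0 -> q != 0 ->
  normaliser (centraliser (mk p q 0 p)) A <-> stabiliser (mkv 1 0) A.
Proof.
move=> p0 q0.
have [a [b [c [d eA]]]] := mkP A; subst A.
rewrite stab_e1 /normaliser.
have hx : mk p q 0 p \in unitmx by rewrite mk_unit mulr0 subr0 mulf_neq0.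
split=> -[u H]; split => //.
  have Cx : centraliser (mk p q 0 p) (mk p q 0 p) by rewrite centr_u.
  have hM := (H _ hx).1 Cx.
  have EM : (mk a b c d *m mk p q 0 p *m invmx (mk a b c d)) *m mk a b c d
     = mk a b c d *m mk p q 0 p by rewrite mulmxKV.
  move: hM EM.
  have [m1 [m2 [m3 [m4 ->]]]] := mkP (mk a b c d *m mk p q 0 p *m invmx (mk a b c d)).
  rewrite centr_u // => -[_ m30 m14]; subst m3 m4.
  rewrite !mkM => /mk_inj [F1 F2 F3 F4].
  rewrite ?(mulr0, mul0r, addr0, add0r) in F1 F2 F3 F4.
  apply/eqP/negPn/negP => cn0.
  have mp : m1 = p by apply: (mulIf cn0); rewrite F3 mulrC.
  subst m1.
  have : c * q = 0.
    have -> : c * q = (c * q + d * p) - p * d by ring.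
    by rewrite -F4 subrr.
  by move/eqP; rewrite mulf_eq0 (negbTE cn0) (negbTE q0).
subst c => B hB.
apply: (centr_upper p0 q0 u hB).
  by rewrite !unitmx_mul unitmx_inv u hB.
by rewrite mulmxKV.
Qed.
End Norm2.
Section Roots.
Variable k : fieldType.
Variable l : nat.
Hypothesis lR : (l%:R : k) != 0.

Lemma root_form (p q : k) (y : 'M[k]_2) c : p != 0 -> q != 0 -> y \in unitmx ->
  c != 0 -> y ^+ l = c *: mk p q 0 p ->
  exists a, a != 0 /\ y = a *: mk 1 (q / (l%:R * p)) 0 1.
Proof.
move=> p0 q0 uy c0 E.
have cm : y * y ^+ l = y ^+ l * y := commrX l (commr_refl y).
rewrite E -!mulmxE -scalemxAr -scalemxAl in cm.
have {cm} cm := scalerI c0 cm.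
have [a [b [e [d ey]]]] := mkP y; subst y.
move: cm; rewrite !mkM => /mk_inj [G1 G2 G3 G4].
rewrite ?(mulr0, mul0r, addr0, add0r) in G1 G2 G3 G4.
have e0 : e = 0.
  have : q * e = 0.
    have -> : q * e = (p * a + q * e) - a * p by ring.
    by rewrite -G1 subrr.
  by move/eqP; rewrite mulf_eq0 (negbTE q0) => /eqP.
subst e.
have da : d = a.
  apply: (mulfI q0); have -> : q * d = (p * b + q * d) - p * b by ring.
  by rewrite -G2; ring.
subst d.
have [a0 _] := unit_nz uy.
have ey : mk a b 0 a = a *: mk 1 (b / a) 0 1.
  by rewrite mkZ; congr mk; field.
have E2 := E; rewrite ey exprZn powu !mkZ in E2; case: (mk_inj E2) => H1 H2 _ _.
have cE : c = a ^+ l / p by rewrite -[a ^+ l]mulr1 H1; field.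
rewrite cE in H2.
have al0 : a ^+ l != 0 by rewrite expf_neq0.
have H3 : l%:R * (b / a) = q / p.
  by apply: (mulfI al0); rewrite H2; field.
exists a; split => //; rewrite mkZ; congr mk; rewrite ?mulr1 ?mulr0 //.
have Hq : q = l%:R * (b / a) * p by rewrite H3 divfK.
by rewrite Hq; field; rewrite lR a0 p0.
Qed.

Lemma uniqdiv_u (p q : k) : p != 0 -> q != 0 -> uniq_divisible l (mk p q 0 p).
Proof.
move=> p0 q0; split.
  exists (mk 1 (q / (l%:R * p)) 0 1); split.
    by rewrite mk_unit mulr0 subr0 mulr1 oner_neq0.
  exists p^-1; split; first by rewrite invr_neq0.
  by rewrite powu mkZ; congr mk; field; rewrite ?p0 ?lR.
move=> y y' uy uy' [c [c0 E]] [c' [c0' E']].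
have [a [a0 ->]] := root_form p0 q0 uy c0 E.
have [a' [a0' ->]] := root_form p0 q0 uy' c0' E'.
exists (a / a'); split; first by rewrite mulf_neq0 ?invr_neq0.
by rewrite scalerA; congr (_ *: _); field.
Qed.
End Roots.

Section Closed.
Variable k : closedFieldType.

Lemma nthroot n (a : k) : (0 < n)%N -> exists x, x ^+ n = a.
Proof.
move=> n0.
have [x Hx] := @solve_monicpoly k n (fun i => if i == 0%N then a else 0) n0.
exists x; rewrite Hx; case: n n0 {Hx} => // n _.
rewrite big_ord_recl /= expr0 mulr1 big1 ?addr0 // => i _.
by rewrite mul0r.
Qed.

Lemma zeta l : (1 < l)%N -> (l%:R : k) != 0 -> exists z : k, z ^+ l = 1 /\ z != 1.
Proof.
case: l => // n n0 lR.
have [x Hx] := @solve_monicpoly k n (fun i => -1) n0.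
have S0 : \sum_(i < n.+1) x ^+ i = 0.
  rewrite big_ord_recr /= Hx -big_split /= big1 // => i _; ring.
exists x; split.
  by apply/eqP; rewrite -subr_eq0 subrX1 S0 mulr0.
apply/eqP => x1; move: S0; subst x.
under eq_bigr do rewrite expr1n.
rewrite sumr_const card_ord => /eqP; exact/negP.
Qed.

Lemma eigvec (A : 'M[k]_2) : exists v, fixes_pt A v.
Proof.
have [a [b [c [d ->]]]] := mkP A.
have [x Hx] := @solve_monicpoly k 2
  (fun i => if i == 0%N then b * c - a * d else a + d) isT.
rewrite !big_ord_recl big_ord0 /= expr0 expr1 mulr1 addr0 in Hx.
case: (eqVneq b 0) => [b0|b0].
  exists (mkv 0 1); split; first by rewrite mkv_eq0 oner_eq0 andbF.
  by exists d; rewrite mkMv mkvZ b0; congr mkv; ring.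
exists (mkv b (x - a)); split; first by rewrite mkv_eq0 (negbTE b0).
exists x; rewrite mkMv mkvZ; congr mkv; first ring.
rewrite (_ : x * (x - a) = x ^+ 2 - a * x); last by ring.
by rewrite Hx; ring.
Qed.

End Closed.

Section Basis.
Variable k : fieldType.

Lemma basis_of (v : 'cV[k]_2) : v != 0 ->
  exists Q, Q \in unitmx /\ Q *m mkv 1 0 = v.
Proof.
have [x [y ->]] := mkvP v; rewrite mkv_eq0 negb_and => nz.
case: (eqVneq x 0) => [x0|x0].
  subst x; rewrite eqxx /= in nz.
  exists (mk 0 1 y 0); split.
    by rewrite mk_unit mul0r sub0r mul1r oppr_eq0.
  by rewrite mkMv; congr mkv; ring.
exists (mk x 0 y 1); split.
  by rewrite mk_unit mulr1 mul0r subr0.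
by rewrite mkMv; congr mkv; ring.
Qed.

Lemma indep x y z t : mkv x y != 0 :> 'cV[k]_2 -> mkv z t != 0 :> 'cV[k]_2 ->
  ~ projeq (mkv z t) (mkv x y) -> mk x z y t \in unitmx.
Proof.
rewrite !mkv_eq0 !negb_and => nv nw np.
rewrite mk_unit; apply/eqP => D; apply: np.
case: (eqVneq x 0) => [x0|x0].
  subst x; rewrite eqxx /= in nv.
  have z0 : z = 0.
    have zy : z * y = 0.
      have -> : z * y = - (0 * t - z * y) by ring.
      by rewrite D oppr0.
    by move/eqP: zy; rewrite mulf_eq0 (negbTE nv) orbF => /eqP.
  subst z; rewrite eqxx /= in nw.
  exists (t / y); split; first by rewrite mulf_neq0 ?invr_neq0.
  by rewrite mkvZ; congr mkv; field.
have tx : t * x = z * y.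
  apply/eqP; rewrite -subr_eq0; apply/eqP.
  have -> : t * x - z * y = x * t - z * y by ring.
  exact: D.
have z0 : z != 0.
  apply/negP => /eqP z0; subst z; rewrite eqxx /= in nw.
  by move/eqP: tx; rewrite mul0r mulf_eq0 (negbTE nw) (negbTE x0).
exists (z / x); split; first by rewrite mulf_neq0 ?invr_neq0.
rewrite mkvZ; congr mkv; first by field.
by apply: (mulIf x0); rewrite tx; field.
Qed.
End Basis.
Section Final.
Variable k : fieldType.

Lemma parabolic_form (x : 'M[k]_2) : x \in unitmx -> parabolic x ->
  exists Q p q, [/\ Q \in unitmx, p != 0, q != 0 & x = conj Q (mk p q 0 p)].
Proof.
move=> hx [v [fv uv]].
have [Q [hQ eQ]] := basis_of fv.1.
have ex : x = conj Q (conj (invmx Q) x) by rewrite conjVK.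
have F : fixes_pt (conj (invmx Q) x) (mkv 1 0).
  by rewrite -(fixes_conj hQ) -ex eQ.
have U : forall w, fixes_pt (conj (invmx Q) x) w -> projeq w (mkv 1 0).
  move=> w; rewrite -(fixes_conj hQ) -ex => /uv [c [c0 E]].
  exists c; split => //; apply: (Qvec_inj hQ).
  by rewrite E -eQ scalemxAr.
have hu : conj (invmx Q) x \in unitmx by rewrite conjV_unit.
move: ex F U hu.
have [p [q [r [s ->]]]] := mkP (conj (invmx Q) x).
move=> ex [_ [c /eqP]]; rewrite mkMv mkvZ => /eqP /mkv_inj [_].
rewrite mulr1 !mulr0 addr0 => r0; subst r => U hu.
have [p0 s0] := unit_nz hu.
have q0 : q != 0.
  apply/negP => /eqP q0; subst q.
  have : projeq (mkv 0 1) (mkv 1 0 : 'cV[k]_2).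
    apply: U; split; first by rewrite mkv_eq0 oner_eq0 andbF.
    by exists s; rewrite mkMv mkvZ; congr mkv; ring.
  move=> [e [_]]; rewrite mkvZ => /mkv_inj [_]; rewrite mulr0 => /eqP.
  by rewrite oner_eq0.
have ps : p = s.
  apply/eqP/negPn/negP => ps.
  have : projeq (mkv q (s - p)) (mkv 1 0 : 'cV[k]_2).
    apply: U; split; first by rewrite mkv_eq0 subr_eq0 (eq_sym s) (negbTE ps) andbF.
    by exists s; rewrite mkMv mkvZ; congr mkv; ring.
  move=> [e [_]]; rewrite mkvZ => /mkv_inj [_]; rewrite mulr0 => /eqP.
  by rewrite subr_eq0 (eq_sym s) (negbTE ps).
subst s; by exists Q, p, q.
Qed.
End Final.

Section Final2.
Variable k : closedFieldType.
Variable l : nat.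
Hypothesis l1 : (1 < l)%N.
Hypothesis lR : (l%:R : k) != 0.

Lemma diag_not_uniq (a d : k) : a != 0 -> d != 0 ->
  ~ uniq_divisible l (mk a 0 0 d).
Proof.
move=> a0 d0 [_ U].
have l0 : (0 < l)%N by exact: ltnW.
have [r Hr] := nthroot a l0.
have [s Hs] := nthroot d l0.
have [z [Hz z1]] := zeta l1 lR.
have r0 : r != 0 by apply: contraNneq a0 => r0; rewrite -Hr r0 expr0n gtn_eqF.
have s0 : s != 0 by apply: contraNneq d0 => s0; rewrite -Hs s0 expr0n gtn_eqF.
have z0 : z != 0 by apply: contraNneq (oner_neq0 k) => z0; rewrite -Hz z0 expr0n gtn_eqF.
have [c [c0 E]] : projeq (mk r 0 0 s) (mk (r * z) 0 0 s).
  apply: U.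
  - by rewrite mk_unit mulr0 subr0 mulf_neq0.
  - by rewrite mk_unit mulr0 subr0 !mulf_neq0.
  - by exists 1; rewrite oner_neq0 scale1r powd Hr Hs.
  - by exists 1; rewrite oner_neq0 scale1r powd exprMn Hr Hz mulr1 Hs.
rewrite mkZ in E; case: (mk_inj E) => E1 _ _ E4.
have c1 : c = 1 by apply: (mulIf s0); rewrite -E4 mul1r.
subst c; rewrite mul1r in E1.
have zz : z = 1 by apply: (mulfI r0); rewrite -E1 mulr1.
by rewrite zz eqxx in z1.
Qed.
End Final2.
Unset Implicit Arguments.

Theorem mainTheorem14 (k : closedFieldType) (l : nat)
  (hl : prime l) (hchar : l \notin [pchar k]) :
  (forall A : 'M[k]_2, A \in unitmx ->
     (parabolic A <-> uniq_divisible l A)) /\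
  (forall H : 'M[k]_2 -> Prop, pgl_subgroup H ->
     ((exists v : 'cV[k]_2, v != 0 /\ same_subgroup H (stabiliser v)) <->
      (exists x : 'M[k]_2, x \in unitmx /\ parabolic x /\
         same_subgroup H (normaliser (centraliser x))))).
Proof.
have l1 : (1 < l)%N := prime_gt1 hl.
have lR : (l%:R : k) != 0 by move: hchar; rewrite inE /= hl.
have key : forall (Q : 'M[k]_2) p q, Q \in unitmx -> p != 0 -> q != 0 ->
  forall A, stabiliser (Q *m mkv 1 0) A <->
            normaliser (centraliser (conj Q (mk p q 0 p))) A.
  move=> Q p q hQ p0 q0 A.
  by rewrite -(conjVK hQ A) (stabiliser_conj hQ) (normaliser_conj hQ) norm_u.
split.
  move=> A hA; split.
    move=> pA; have [Q [p [q [hQ p0 q0 ->]]]] := parabolic_form hA pA.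
    exact: (uniqdiv_conj hQ (uniqdiv_u lR p0 q0)).
  move=> HU; case: (classic (parabolic A)) => // np; exfalso.
  have [v fv] := eigvec A.
  have [w [fw nw]] : exists w, fixes_pt A w /\ ~ projeq w v.
    apply: NNPP => H; apply: np; exists v; split => // w fw.
    by apply: NNPP => nwv; apply: H; exists w.
  have [x [y ev]] := mkvP v; subst v.
  have [z [t ew]] := mkvP w; subst w.
  case: fv => v0 [al Hal]; case: fw => w0 [be Hbe].
  have hP := indep v0 w0 nw.
  move: hA HU Hal Hbe.
  have [a [b [c [d ->]]]] := mkP A => hA HU Hal Hbe.
  rewrite mkMv mkvZ in Hal; case: (mkv_inj Hal) => Ha1 Ha2.
  rewrite mkMv mkvZ in Hbe; case: (mkv_inj Hbe) => Hb1 Hb2.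
  have EP : mk a b c d *m mk x z y t = mk x z y t *m mk al 0 0 be.
    rewrite !mkM; congr mk; [rewrite Ha1|rewrite Hb1|rewrite Ha2|rewrite Hb2]; ring.
  have EA : mk a b c d = conj (mk x z y t) (mk al 0 0 be).
    by rewrite /conj -EP mulmxK.
  have hD : mk al 0 0 be \in unitmx by rewrite -(conj_unit hP) -EA.
  have [al0 be0] := unit_nz hD.
  apply: (diag_not_uniq l1 lR al0 be0).
  have hP' : invmx (mk x z y t) \in unitmx by rewrite unitmx_inv.
  have := uniqdiv_conj hP' HU.
  by rewrite EA conjK.
move=> H _; split.
  move=> [v [v0 HS]].
  have [Q [hQ eQ]] := basis_of v0.
  exists (conj Q (mk 1 1 0 1)); split.
    by rewrite (conj_unit hQ) mk_unit mulr1 mulr0 subr0 oner_neq0.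
  split; first exact: (parabolic_conj hQ (parabolic_u 1 (oner_neq0 k))).
  move=> A hA; rewrite -eQ in HS; apply: iff_trans (HS A hA) _.
  exact: (key Q 1 1 hQ (oner_neq0 k) (oner_neq0 k) A).
move=> [x [hx [px HS]]].
have [Q [p [q [hQ p0 q0 ex]]]] := parabolic_form hx px.
exists (Q *m mkv 1 0); split.
  by rewrite (Qvec_eq0 hQ) mkv_eq0 oner_eq0.
move=> A hA; apply: iff_trans (HS A hA) _; rewrite ex.
exact: iff_sym (key Q p q hQ p0 q0 A).
Qed.
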